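(* Let $S=[B_{r-1},[B_r,F_X^+]_q]_q$ and $S^\tau=[B_{\tau(r-1)},[B_{\tau(r)},F_X^-]_q]_q$. Then $B_rS=SB_r$ and $B_{\tau(r)}S^\tau=S^\tau B_{\tau(r)}$ hold in $B_{\mathbf c}$.
   Context: Let $\mathbb K$ be a field of characteristic zero and $q$ an indeterminate. $n\ge1$, $I=\{1,\dots,n\}$, $\mathfrak g=\mathfrak{sl}_{n+1}(\mathbb C)$, simple roots $\alpha_i$, fundamental weights $\varpi_i$, weight lattice $P$, Cartan matrix $a_{ii}=2$, $a_{ij}=-1$ if $|i-j|=1$, else $0$, form $(\alpha_i,\alpha_j)=a_{ij}$, $(\alpha_i,\varpi_j)=\delta_{ij}$. $U_q(\mathfrak g)$ is the $\mathbb K(q^{1/2})$-algebra generated by $E_i,F_i,K_\mu$ ($\mu\in P$) with $K_0=1$, $K_\mu K_\lambda=K_{\mu+\lambda}$, $K_\mu E_i=q^{(\alpha_i,\mu)}E_iK_\mu$, $K_\mu F_i=q^{-(\alpha_i,\mu)}F_iK_\mu$, $E_iF_j-F_jE_i=\delta_{ij}\frac{K_i-K_i^{-1}}{q-q^{-1}}$ ($K_i=K_{\alpha_i}$), and the quantum Serre relations. $[a,b]_c=ab-cba$. Fix $r$ with $2\le r\le\lceil n/2\rceil-1$, $X=\{r+1,\dots,n-r\}$, $\tau(i)=n-i+1$ (on weights $\varpi_i\mapsto\varpi_{\tau(i)}$). $E_X^+=[E_{r+1},[\dots,[E_{n-r-1},E_{n-r}]_{q^{-1}}\dots]_{q^{-1}}]_{q^{-1}}$,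 $E_X^-=[E_{n-r},[\dots,[E_{r+2},E_{r+1}]_{q^{-1}}\dots]_{q^{-1}}]_{q^{-1}}$, $F_X^+=[F_{r+1},[\dots,[F_{n-r-1},F_{n-r}]_q\dots]_q]_q$, $F_X^-=[F_{n-r},[\dots,[F_{r+2},F_{r+1}]_q\dots]_q]_q$ (equal to $E_{r+1}$, $F_{r+1}$ if $|X|=1$); $K_X=K_{r+1}\cdots K_{n-r}$; $L_i=K_iK_{\tau(i)}^{-1}$. $\mathcal M_X$ is generated by $E_j,F_j,K_j^{\pm1}$ ($j\in X$); $U^0_\Theta$ by the $K_\mu$ with $-w_X\tau(\mu)=\mu$ ($w_X$ longest element of the parabolic Weyl subgroup for $X$). Parameters $c_i\in\mathbb K(q^{1/2})^\times$ ($i\in I\setminus X$) with $c_i=c_{\tau(i)}$ for $i\notin X\cup\{r,\tau(r)\}$. $B_i=F_i-c_iE_{\tau(i)}K_i^{-1}$ for $i\in I\setminus(X\cup\{r,\tau(r)\})$, $B_r=F_r-c_r[E_X^+,E_{\tau(r)}]_{q^{-1}}K_r^{-1}$, $B_{\tau(r)}=F_{\tau(r)}-c_{\tau(r)}[E_X^-,E_r]_{q^{-1}}K_{\tau(r)}^{-1}$; $B_{\mathbf c}$ is the subalgebra generated by $\mathcal M_X$, $U^0_\Theta$ and the $B_i$. *)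

(* Defs.v *)
From HB Require Import structures.
From mathcomp Require Import all_boot all_order all_algebra.
From mathcomp Require Import fraction.
Set Implicit Arguments. Unset Strict Implicit. Unset Printing Implicit Defensive.
Import Order.TTheory GRing.Theory Num.Theory.
Local Open Scope ring_scope.

(* The field K(q^{1/2}) : rational functions in the indeterminate v = q^{1/2}. *)
Definition ratfun (k : fieldType) := {fraction {poly k}}.
Definition qhalf (k : fieldType) : ratfun k := tofrac 'X.
Definition qpar (k : fieldType) : ratfun k := (qhalf k) ^+ 2.

(* Weights of sl_{n+1}: P = Z^n in the basis of fundamental weights,
   mu = sum_j mu_j varpi_j ; coordinates indexed 1..n (as nat). *)
Definition wt (n : nat) := {ffun 'I_n -> int}.
Definition coord (n : nat) (mu : wt n) (i : nat) : int :=
  \sum_(k < n | k.+1 == i) mu k.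

Definition cartan (i j : nat) : int :=
  if i == j then 2 else if (i == j.+1) || (j == i.+1) then -1 else 0.

Definition alpha (n : nat) (i : nat) : wt n := [ffun k : 'I_n => cartan i k.+1].

Section Uq.
Variables (F : fieldType) (A : algType F).

Definition qcomm (a b : A) (c : F) : A := a * b - c *: (b * a).

(* Defining relations of U_q(sl_{n+1}) for generators E_i, F_i (i = 1..n)
   and K_mu (mu in P), with q in F. (alpha_i, mu) = coord mu i. *)
Definition UqRel (n : nat) (q : F) (E Fg : nat -> A) (K : wt n -> A) : Prop :=
  [/\ K 0 = 1,
      (forall mu la : wt n, K (mu + la) = K mu * K la),
      (forall (mu : wt n) i, (1 <= i <= n)%N ->
          K mu * E i = (q ^ coord mu i) *: (E i * K mu)),
      (forall (mu : wt n) i, (1 <= i <= n)%N ->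
          K mu * Fg i = (q ^ (- coord mu i)) *: (Fg i * K mu)) &
      (forall i j, (1 <= i <= n)%N -> (1 <= j <= n)%N ->
          E i * Fg j - Fg j * E i =
          if i == j then (q - q^-1)^-1 *: (K (alpha n i) - K (- alpha n i))
          else 0) /\
      (forall i j, (1 <= i <= n)%N -> (1 <= j <= n)%N ->
          (cartan i j = -1 ->
                 E i ^+ 2 * E j - (q + q^-1) *: (E i * E j * E i)
                   + E j * E i ^+ 2 = 0 /\
                 Fg i ^+ 2 * Fg j - (q + q^-1) *: (Fg i * Fg j * Fg i)
                   + Fg j * Fg i ^+ 2 = 0) /\
              (cartan i j = 0 -> E i * E j = E j * E i /\
                                 Fg i * Fg j = Fg j * Fg i))].

Variables (n r : nat) (q : F) (E Fg : nat -> A) (K : wt n -> A) (c : nat -> F).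

Definition tau (i : nat) : nat := (n - i).+1.

(* E_X^+ = [E_{r+1},[...,[E_{n-r-1},E_{n-r}]_{q^-1}...]_{q^-1}]_{q^-1} *)
Definition EXp : A :=
  foldr (fun i acc => qcomm (E i) acc q^-1) (E (n - r)) (iota r.+1 (n - r - r).-1).
(* E_X^- = [E_{n-r},[...,[E_{r+2},E_{r+1}]_{q^-1}...]_{q^-1}]_{q^-1} *)
Definition EXm : A :=
  foldr (fun i acc => qcomm (E i) acc q^-1) (E r.+1) (rev (iota r.+2 (n - r - r).-1)).
Definition FXp : A :=
  foldr (fun i acc => qcomm (Fg i) acc q) (Fg (n - r)) (iota r.+1 (n - r - r).-1).
Definition FXm : A :=
  foldr (fun i acc => qcomm (Fg i) acc q) (Fg r.+1) (rev (iota r.+2 (n - r - r).-1)).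

(* K_i^{-1} = K_{-alpha_i} *)
Definition Bgen (i : nat) : A := Fg i - c i *: (E (tau i) * K (- alpha n i)).
Definition Br : A := Fg r - c r *: (qcomm EXp (E (tau r)) q^-1 * K (- alpha n r)).
Definition Btr : A :=
  Fg (tau r) - c (tau r) *: (qcomm EXm (E r) q^-1 * K (- alpha n (tau r))).

Definition Sel : A := qcomm (Bgen r.-1) (qcomm Br FXp q) q.
Definition Stau : A := qcomm (Bgen (tau r.-1)) (qcomm Btr FXm q) q.

End Uq.

(* Main.v *)
Require Import Defs.
From HB Require Import structures.
From mathcomp Require Import all_boot all_order all_algebra.
From mathcomp Require Import fraction.
From mathcomp Require Import ring zify.
Set Implicit Arguments. Unset Strict Implicit. Unset Printing Implicit Defensive.
Import Order.TTheory GRing.Theory Num.Theory.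
Local Open Scope ring_scope.


Inductive cexpr := CAt of nat | C0 | C1 | CAdd of cexpr & cexpr | CMul of cexpr & cexpr | COpp of cexpr.
Inductive aexpr := AAt of nat | A0 | A1 | AAdd of aexpr & aexpr | AMul of aexpr & aexpr
  | AOpp of aexpr | AScale of cexpr & aexpr.

Definition ncpoly := seq (cexpr * seq nat).

Fixpoint ncnorm (e : aexpr) : ncpoly :=
  match e with
  | AAt i => [:: (C1, [:: i])]
  | A0 => [::]
  | A1 => [:: (C1, [::])]
  | AAdd x y => ncnorm x ++ ncnorm y
  | AMul x y => let py := ncnorm y in
      flatten [seq [seq (CMul m1.1 m2.1, m1.2 ++ m2.2) | m2 <- py] | m1 <- ncnorm x]
  | AOpp x => [seq (COpp m.1, m.2) | m <- ncnorm x]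
  | AScale c x => [seq (CMul c m.1, m.2) | m <- ncnorm x]
  end.

Fixpoint word_of (e : aexpr) : option (seq nat) :=
  match e with
  | AAt i => Some [:: i]
  | A1 => Some [::]
  | AMul x y => match word_of x, word_of y with Some a, Some b => Some (a ++ b) | _, _ => None end
  | _ => None
  end.

Fixpoint find_split (l w : seq nat) : option (seq nat * seq nat) :=
  if take (size l) w == l then Some ([::], drop (size l) w) else
  match w with
  | [::] => None
  | x :: w' => match find_split l w' with Some p => Some (x :: p.1, p.2) | None => None end
  end.

Definition rule := (seq nat * ncpoly)%type.

Fixpoint step_mono (rs : seq rule) (m : cexpr * seq nat) : option ncpoly :=
  match rs with
  | [::] => None
  | r :: rs' =>
    match find_split r.1 m.2 with
    | Some (w1, w2) => Some [seq (CMul m.1 m'.1, w1 ++ m'.2 ++ w2) | m' <- r.2]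
    | None => step_mono rs' m
    end
  end.

Fixpoint ncreduce (rs : seq rule) (fuel : nat) (p : ncpoly) : ncpoly :=
  match fuel with
  | 0 => p
  | S f => match p with
    | [::] => [::]
    | m :: p' => match step_mono rs m with
       | Some ms => ncreduce rs f (ms ++ p')
       | None => m :: ncreduce rs f p'
       end
    end
  end.

Fixpoint ins (w : seq nat) (c : cexpr) (l : seq (seq nat * cexpr)) :=
  match l with
  | [::] => [:: (w, c)]
  | (w', c') :: l' => if w == w' then (w, CAdd c' c) :: l' else (w', c') :: ins w c l'
  end.

Definition collect (p : ncpoly) := foldr (fun m l => ins m.2 m.1 l) [::] p.

Definition mkrules (rs : seq (aexpr * aexpr)) : seq rule :=
  pmap (fun r => match word_of r.1 with Some w => if w is [::] then None else Some (w, ncnorm r.2) | None => None end) rs.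

Definition nccoefs (rs : seq (aexpr * aexpr)) (fuel : nat) (e1 e2 : aexpr) : seq cexpr :=
  map snd (collect (ncreduce (mkrules rs) fuel (ncnorm (AAdd e1 (AOpp e2))))).

Section NCSem.
Variables (F : fieldType) (A : algType F) (cl : seq F) (al : seq A).

Fixpoint ic (c : cexpr) : F :=
  match c with
  | CAt i => nth 0 cl i | C0 => 0 | C1 => 1
  | CAdd x y => ic x + ic y | CMul x y => ic x * ic y | COpp x => - ic x
  end.
Fixpoint ia (e : aexpr) : A :=
  match e with
  | AAt i => nth 0 al i | A0 => 0 | A1 => 1
  | AAdd x y => ia x + ia y | AMul x y => ia x * ia y | AOpp x => - ia x
  | AScale c x => ic c *: ia x
  end.
Definition iw (w : seq nat) : A := foldr (fun i acc => nth 0 al i * acc) 1 w.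
Definition ip (p : ncpoly) : A := \sum_(m <- p) ic m.1 *: iw m.2.

Lemma iw_cat w1 w2 : iw (w1 ++ w2) = iw w1 * iw w2.
Proof. by elim: w1 => [|i w IH] /=; rewrite ?mul1r // IH mulrA. Qed.

Lemma ip_cat p1 p2 : ip (p1 ++ p2) = ip p1 + ip p2.
Proof. by rewrite /ip big_cat. Qed.

Lemma ncnorm_ok e : ip (ncnorm e) = ia e.
Proof.
elim: e => [i||| x IHx y IHy| x IHx y IHy| x IHx| c x IHx] /=.
- by rewrite /ip big_seq1 scale1r /= mulr1.
- by rewrite /ip big_nil.
- by rewrite /ip big_seq1 scale1r.
- by rewrite ip_cat IHx IHy.
- rewrite -IHx -IHy /ip big_flatten /= big_map mulr_suml; apply: eq_bigr => m1 _.
  rewrite big_map mulr_sumr; apply: eq_bigr => m2 _ /=.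
  by rewrite iw_cat -scalerAl -scalerAr scalerA.
- by rewrite -IHx /ip big_map -sumrN; apply: eq_bigr => m _; rewrite /= scaleNr.
- by rewrite -IHx /ip big_map scaler_sumr; apply: eq_bigr => m _; rewrite /= scalerA.
Qed.

Lemma word_of_ok e w : word_of e = Some w -> iw w = ia e.
Proof.
elim: e w => [i||| x IHx y IHy| x IHx y IHy| x IHx| c x IHx] w //=.
- by case=> <-; rewrite /= mulr1.
- by case=> <-.
- case Ex: (word_of x) => [a|] //; case Ey: (word_of y) => [b|] //.
  by case=> <-; rewrite iw_cat (IHx _ Ex) (IHy _ Ey).
Qed.

Lemma find_split_ok l w w1 w2 : find_split l w = Some (w1, w2) -> w = w1 ++ l ++ w2.
Proof.
elim: w w1 w2 => [|x w IH] w1 w2 /=.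
- by case: eqP => // <- [<- <-].
- case: eqP => [E [<- <-]|_]; first by rewrite /= -{1}E cat_take_drop.
  case E: (find_split l w) => [[a b]|] //= [<- <-]; by rewrite (IH _ _ E).
Qed.

Fixpoint rvalid (rs : seq rule) : Prop :=
  match rs with [::] => True | r :: rs' => iw r.1 = ip r.2 /\ rvalid rs' end.

Lemma step_mono_ok rs m ms : rvalid rs -> step_mono rs m = Some ms -> ip ms = ic m.1 *: iw m.2.
Proof.
elim: rs => [|r rs IH] //= [Hr Hv].
case E: (find_split r.1 m.2) => [[w1 w2]|].
- case=> <-; rewrite (find_split_ok E) /ip big_map !iw_cat.
  rewrite Hr /ip mulr_suml mulr_sumr scaler_sumr.
  apply: eq_bigr => m' _ /=; rewrite !iw_cat.
  by rewrite -scalerAl -scalerAr scalerA mulrA.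
- by apply: IH.
Qed.

Lemma ncreduce_ok rs fuel p : rvalid rs -> ip (ncreduce rs fuel p) = ip p.
Proof.
move=> Hv; elim: fuel p => [|f IH] p //=.
case: p => [|m p] //=.
case E: (step_mono rs m) => [ms|].
- by rewrite IH ip_cat (step_mono_ok Hv E) /ip big_cons.
- by rewrite /ip !big_cons -/(ip _) IH.
Qed.

Definition iwc (l : seq (seq nat * cexpr)) : A := \sum_(m <- l) ic m.2 *: iw m.1.

Lemma ins_ok w c l : iwc (ins w c l) = ic c *: iw w + iwc l.
Proof.
elim: l => [|[w' c'] l IH] /=; first by rewrite /iwc big_seq1 big_nil addr0.
case: eqP => [->|_].
- by rewrite /iwc !big_cons /= scalerDl addrA [X in X + _]addrC.
- by rewrite /iwc !big_cons -!/(iwc _) IH addrCA.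
Qed.

Lemma collect_ok p : iwc (collect p) = ip p.
Proof.
elim: p => [|m p IH] /=; first by rewrite /iwc /ip !big_nil.
by rewrite ins_ok IH /ip big_cons.
Qed.

Fixpoint all_valid (rs : seq (aexpr * aexpr)) : Prop :=
  match rs with [::] => True | r :: rs' => ia r.1 = ia r.2 /\ all_valid rs' end.

Fixpoint all_zero (cs : seq cexpr) : Prop :=
  match cs with [::] => True | c :: cs' => ic c = 0 /\ all_zero cs' end.

Lemma mkrules_ok rs : all_valid rs -> rvalid (mkrules rs).
Proof.
elim: rs => [|[l r] rs IH] //=.
move=> [Hr Hrs]; rewrite /mkrules /=.
case E: (word_of l) => [w|] /=; last by apply: IH.
case: w E => [|i w] E /=; first by apply: IH.
split; last by apply: IH.
by rewrite ncnorm_ok -Hr -(word_of_ok E).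
Qed.

Lemma iwc_zero l : all_zero (map snd l) -> iwc l = 0.
Proof.
elim: l => [|[w c] l IH] /=; first by rewrite /iwc big_nil.
by case=> H0 H; rewrite /iwc big_cons /= H0 scale0r add0r -/(iwc _) IH.
Qed.

Lemma nc_sound rs fuel e1 e2 cs :
  nccoefs rs fuel e1 e2 = cs -> all_valid rs -> all_zero cs -> ia e1 = ia e2.
Proof.
move=> Ec Hv Hz; apply/eqP; rewrite -subr_eq0; apply/eqP.
have -> : ia e1 - ia e2 = ia (AAdd e1 (AOpp e2)) by [].
rewrite -ncnorm_ok -(ncreduce_ok fuel _ (mkrules_ok Hv)) -collect_ok.
by apply: iwc_zero; rewrite -Ec in Hz.
Qed.

End NCSem.

Ltac nc_snoc l x := lazymatch l with
  | nil => constr:(cons x nil)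
  | cons ?h ?t => let t' := nc_snoc t x in constr:(cons h t')
  end.
Ltac nc_find x l := lazymatch l with
  | nil => constr:(@None nat)
  | cons x _ => constr:(Some 0%N)
  | cons _ ?t => let r := nc_find x t in
      lazymatch r with Some ?n => constr:(Some (S n)) | None => constr:(@None nat) end
  end.
Ltac nc_len l := lazymatch l with nil => constr:(0%N) | cons _ ?t => let n := nc_len t in constr:(S n) end.
Ltac nc_atom x l := let r := nc_find x l in
  lazymatch r with
  | Some ?n => constr:((n, l))
  | None => let n := nc_len l in let l' := nc_snoc l x in constr:((n, l'))
  end.

Ltac reifyF c lf :=
  lazymatch c with
  | 0%R => constr:((C0, lf))
  | 1%R => constr:((C1, lf))
  | (?x + ?y)%R => let r1 := reifyF x lf in lazymatch r1 with (?e1, ?lf1) =>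
        let r2 := reifyF y lf1 in lazymatch r2 with (?e2, ?lf2) => constr:((CAdd e1 e2, lf2)) end end
  | (?x * ?y)%R => let r1 := reifyF x lf in lazymatch r1 with (?e1, ?lf1) =>
        let r2 := reifyF y lf1 in lazymatch r2 with (?e2, ?lf2) => constr:((CMul e1 e2, lf2)) end end
  | (- ?x)%R => let r1 := reifyF x lf in lazymatch r1 with (?e1, ?lf1) => constr:((COpp e1, lf1)) end
  | _ => let r := nc_atom c lf in lazymatch r with (?n, ?lf1) => constr:((CAt n, lf1)) end
  end.

Ltac reifyA t la lf :=
  lazymatch t with
  | qcomm ?x ?y ?c => reifyA (x * y - c *: (y * x))%R la lf
  | 0%R => constr:((A0, la, lf))
  | 1%R => constr:((A1, la, lf))
  | (?x + ?y)%R => let r1 := reifyA x la lf in lazymatch r1 with (?e1, ?la1, ?lf1) =>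
        let r2 := reifyA y la1 lf1 in lazymatch r2 with (?e2, ?la2, ?lf2) => constr:((AAdd e1 e2, la2, lf2)) end end
  | (?x * ?y)%R => let r1 := reifyA x la lf in lazymatch r1 with (?e1, ?la1, ?lf1) =>
        let r2 := reifyA y la1 lf1 in lazymatch r2 with (?e2, ?la2, ?lf2) => constr:((AMul e1 e2, la2, lf2)) end end
  | (- ?x)%R => let r1 := reifyA x la lf in lazymatch r1 with (?e1, ?la1, ?lf1) => constr:((AOpp e1, la1, lf1)) end
  | (?c *: ?x)%R => let r0 := reifyF c lf in lazymatch r0 with (?ec, ?lf0) =>
        let r1 := reifyA x la lf0 in lazymatch r1 with (?e1, ?la1, ?lf1) => constr:((AScale ec e1, la1, lf1)) end end
  | _ => let r := nc_atom t la in lazymatch r with (?n, ?la1) => constr:((AAt n, la1, lf)) end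
  end.

Ltac reifyR T la lf :=
  lazymatch T with
  | True => constr:((@nil (aexpr * aexpr), la, lf))
  | (?L = ?R) /\ ?T' =>
     let r1 := reifyA L la lf in lazymatch r1 with (?e1, ?la1, ?lf1) =>
     let r2 := reifyA R la1 lf1 in lazymatch r2 with (?e2, ?la2, ?lf2) =>
     let r3 := reifyR T' la2 lf2 in lazymatch r3 with (?rs, ?la3, ?lf3) =>
       constr:((cons (e1, e2) rs, la3, lf3)) end end end
  end.

Ltac nc_prove HR la0 lf0 :=
  lazymatch goal with |- ?L = ?R =>
  let T := type of HR in
  let r0 := reifyR T la0 lf0 in lazymatch r0 with (?rs, ?la1, ?lf1) =>
  let r1 := reifyA L la1 lf1 in lazymatch r1 with (?eL, ?la2, ?lf2) =>
  let r2 := reifyA R la2 lf2 in lazymatch r2 with (?eR, ?la, ?lf) =>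
  let cs := eval vm_compute in (nccoefs rs (2 ^ 17)%N eL eR) in
  change (ia lf la eL = ia lf la eR);
  refine (@nc_sound _ _ lf la rs (2 ^ 17)%N eL eR cs _ HR _);
  [ vm_compute; reflexivity | cbn [all_zero ic nth] ]
  end end end end.



Ltac nc_side := repeat (apply/andP; split); try done.
Ltac nc_fin := repeat split; field; nc_side.

Lemma cartan_same i : cartan i i = 2.
Proof. by rewrite /cartan eqxx. Qed.
Lemma cartan_adj i : cartan i i.+1 = -1.
Proof. by rewrite /cartan (ltn_eqF (ltnSn i)) eqxx orbT. Qed.
Lemma cartan_adj' i : cartan i.+1 i = -1.
Proof. by rewrite /cartan (gtn_eqF (ltnSn i)) eqxx. Qed.
Lemma cartan_far i j : (i.+2 <= j)%N -> cartan i j = 0 /\ cartan j i = 0.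
Proof.
move=> h; rewrite /cartan.
have h1 : (i == j) = false by apply/eqP; lia.
have h2 : (i == j.+1) = false by apply/eqP; lia.
have h3 : (j == i.+1) = false by apply/eqP; lia.
have h4 : (j == i) = false by apply/eqP; lia.
have h5 : (j.+1 == i) = false by apply/eqP; lia.
have h6 : (i.+1 == j) = false by apply/eqP; lia.
by rewrite ?h1 ?h2 ?h3 ?h4 ?h5 ?h6.
Qed.

Section Chain.
Variables (F : fieldType) (A : algType F) (q : F).
Hypotheses (hq : q != 0) (hq2 : q * q + 1 != 0) (hq3 : q * q - 1 != 0).
Variables (m : nat) (e f kp km : nat -> A).
Hypothesis hEFc : forall i j, (i <= m.+3)%N -> (j <= m.+3)%N -> i != j -> e i * f j = f j * e i.
Hypothesis hEFd : forall i, (i <= m.+3)%N -> e i * f i = f i * e i + (q - q^-1)^-1 *: (kp i - km i).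
Hypothesis hEEc : forall i j, (j <= m.+3)%N -> (i.+2 <= j)%N -> e i * e j = e j * e i.
Hypothesis hFFc : forall i j, (j <= m.+3)%N -> (i.+2 <= j)%N -> f i * f j = f j * f i.
Hypothesis hSE : forall i j, (i <= m.+3)%N -> (j <= m.+3)%N -> (i == j.+1) || (j == i.+1) ->
  e i * e i * e j - (q + q^-1) *: (e i * e j * e i) + e j * e i * e i = 0.
Hypothesis hSF : forall i j, (i <= m.+3)%N -> (j <= m.+3)%N -> (i == j.+1) || (j == i.+1) ->
  f i * f i * f j - (q + q^-1) *: (f i * f j * f i) + f j * f i * f i = 0.
Hypothesis hKme : forall i j, (i <= m.+3)%N -> (j <= m.+3)%N -> km i * e j = q ^ (- cartan i j) *: (e j * km i).
Hypothesis hKpe : forall i j, (i <= m.+3)%N -> (j <= m.+3)%N -> kp i * e j = q ^ (cartan i j) *: (e j * kp i).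
Hypothesis hKmf : forall i j, (i <= m.+3)%N -> (j <= m.+3)%N -> km i * f j = q ^ (cartan i j) *: (f j * km i).
Hypothesis hKK : forall i j, km i * km j = km j * km i.

Lemma hq_ne2 : q + q^-1 != 0.
Proof.
apply: contra hq2 => /eqP h; apply/eqP.
have : q * (q + q^-1) = 0 by rewrite h mulr0.
by rewrite mulrDr mulfV.
Qed.

Definition serre (v u : A) := v * v * u - (q + q^-1) *: (v * u * v) + u * v * v.

Lemma serre_m v u : serre v u = 0 -> v * u * v = (q + q^-1)^-1 *: (v * v * u + u * v * v).
Proof.
move=> h.
have e1 : (q + q^-1) *: (v * u * v) - (v * v * u + u * v * v) = - serre v u.
  rewrite /serre; have HR := I; nc_prove HR [:: v] [:: q]; nc_fin.
move: e1; rewrite h oppr0 => /eqP; rewrite subr_eq0 => /eqP <-.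
by rewrite scalerA mulVf ?hq_ne2 // scale1r.
Qed.
Lemma serre_l v u : serre v u = 0 -> v * v * u = (q + q^-1) *: (v * u * v) - u * v * v.
Proof.
move=> h; apply/eqP; rewrite -subr_eq0; apply/eqP; rewrite -h /serre.
have HR := I; nc_prove HR [:: v] [:: q]; nc_fin.
Qed.
Lemma serre_r v u : serre v u = 0 -> u * v * v = (q + q^-1) *: (v * u * v) - v * v * u.
Proof.
move=> h; apply/eqP; rewrite -subr_eq0; apply/eqP; rewrite -h /serre.
have HR := I; nc_prove HR [:: v] [:: q]; nc_fin.
Qed.

Lemma Kme_far i j : (i <= m.+3)%N -> (j <= m.+3)%N -> (i.+2 <= j)%N || (j.+2 <= i)%N -> km i * e j = e j * km i.
Proof.
move=> hi hj /orP [h|h]; rewrite hKme //; have [h1 h2] := cartan_far h;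
  by rewrite ?h1 ?h2 oppr0 expr0z scale1r.
Qed.
Lemma Kpe_far i j : (i <= m.+3)%N -> (j <= m.+3)%N -> (i.+2 <= j)%N || (j.+2 <= i)%N -> kp i * e j = e j * kp i.
Proof.
move=> hi hj /orP [h|h]; rewrite hKpe //; have [h1 h2] := cartan_far h;
  by rewrite ?h1 ?h2 expr0z scale1r.
Qed.
Lemma Kmf_far i j : (i <= m.+3)%N -> (j <= m.+3)%N -> (i.+2 <= j)%N || (j.+2 <= i)%N -> km i * f j = f j * km i.
Proof.
move=> hi hj /orP [h|h]; rewrite hKmf //; have [h1 h2] := cartan_far h;
  by rewrite ?h1 ?h2 expr0z scale1r.
Qed.
Lemma Kme_adj i : (i.+1 <= m.+3)%N -> km i * e i.+1 = q *: (e i.+1 * km i).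
Proof. by move=> h; rewrite hKme ?cartan_adj ?opprK ?expr1z // ltnW. Qed.
Lemma Kme_adj' i : (i.+1 <= m.+3)%N -> km i.+1 * e i = q *: (e i * km i.+1).
Proof. by move=> h; rewrite hKme ?cartan_adj' ?opprK ?expr1z // ltnW. Qed.
Lemma Kpe_adj i : (i.+1 <= m.+3)%N -> kp i * e i.+1 = q^-1 *: (e i.+1 * kp i).
Proof. by move=> h; rewrite hKpe ?cartan_adj ?exprN1 // ltnW. Qed.
Lemma Kme_same i : (i <= m.+3)%N -> km i * e i = (q * q)^-1 *: (e i * km i).
Proof. by move=> h; rewrite hKme ?cartan_same // -invr_expz expr2. Qed.
Lemma Kmf_adj i : (i.+1 <= m.+3)%N -> km i * f i.+1 = q^-1 *: (f i.+1 * km i).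
Proof. by move=> h; rewrite hKmf ?cartan_adj ?exprN1 // ltnW. Qed.
Lemma Kmf_adj' i : (i.+1 <= m.+3)%N -> km i.+1 * f i = q^-1 *: (f i * km i.+1).
Proof. by move=> h; rewrite hKmf ?cartan_adj' ?exprN1 // ltnW. Qed.
Lemma Kmf_same i : (i <= m.+3)%N -> km i * f i = (q * q) *: (f i * km i).
Proof. by move=> h; rewrite hKmf ?cartan_same // expr2. Qed.

Lemma comm_qcomm (y u v : A) c : y * u = u * y -> y * v = v * y -> y * qcomm u v c = qcomm u v c * y.
Proof. move=> h1 h2; have HR := conj h1 (conj h2 I); nc_prove HR [:: y] [:: c]; nc_fin. Qed.

Lemma qc_qcomm (y u v : A) c l1 l2 : y * u = l1 *: (u * y) -> y * v = l2 *: (v * y) ->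
  y * qcomm u v c = (l1 * l2) *: (qcomm u v c * y).
Proof. move=> h1 h2; have HR := conj h1 (conj h2 I); nc_prove HR [:: y] [:: c]; nc_fin. Qed.

Definition Zc s := foldr (fun j acc => qcomm (e j) acc q^-1) (e m.+2) (iota s (m.+2 - s)).
Definition xc s := foldr (fun j acc => qcomm (f j) acc q) (f m.+1) (iota s (m.+1 - s)).

Lemma Zc_S s : (s <= m.+1)%N -> Zc s = qcomm (e s) (Zc s.+1) q^-1.
Proof. by move=> h; rewrite /Zc subSn // subSS. Qed.
Lemma Zc_end : Zc m.+2 = e m.+2.
Proof. by rewrite /Zc subnn. Qed.
Lemma xc_S s : (s <= m)%N -> xc s = qcomm (f s) (xc s.+1) q.
Proof. by move=> h; rewrite /xc subSn // subSS. Qed.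
Lemma xc_end : xc m.+1 = f m.+1.
Proof. by rewrite /xc subnn. Qed.

Lemma Zc_comm y s : (s <= m.+2)%N -> (forall j, (s <= j)%N -> (j <= m.+2)%N -> y * e j = e j * y) ->
  y * Zc s = Zc s * y.
Proof.
move Hd: (m.+2 - s)%N => d; elim: d s Hd => [|d IH] s Hd hs H.
- have -> : s = m.+2 by lia.
  by rewrite Zc_end; apply: H.
- rewrite Zc_S; last by lia.
  apply: comm_qcomm; first by apply: H.
  by apply: IH; [lia|lia|move=> j h1 h2; apply: H; lia].
Qed.

Lemma xc_comm y s : (s <= m.+1)%N -> (forall j, (s <= j)%N -> (j <= m.+1)%N -> y * f j = f j * y) ->
  y * xc s = xc s * y.
Proof.
move Hd: (m.+1 - s)%N => d; elim: d s Hd => [|d IH] s Hd hs H.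
- have -> : s = m.+1 by lia.
  by rewrite xc_end; apply: H.
- rewrite xc_S; last by lia.
  apply: comm_qcomm; first by apply: H.
  by apply: IH; [lia|lia|move=> j h1 h2; apply: H; lia].
Qed.

Lemma Zc_first y s l : (s <= m.+2)%N -> y * e s = l *: (e s * y) ->
  (forall j, (s < j)%N -> (j <= m.+2)%N -> y * e j = e j * y) -> y * Zc s = l *: (Zc s * y).
Proof.
move=> hs h1 H; case: (ltnP s m.+2) => hs2.
- rewrite Zc_S; last by lia.
  rewrite -[l]mulr1; apply: qc_qcomm => //.
  rewrite scale1r; apply: Zc_comm => //; move=> j h2 h3; apply: H; lia.
- have -> : s = m.+2 by lia.
  by rewrite Zc_end -(_ : s = m.+2) //; lia.
Qed.

Lemma xc_first y s l : (s <= m.+1)%N -> y * f s = l *: (f s * y) ->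
  (forall j, (s < j)%N -> (j <= m.+1)%N -> y * f j = f j * y) -> y * xc s = l *: (xc s * y).
Proof.
move=> hs h1 H; case: (ltnP s m.+1) => hs2.
- rewrite xc_S; last by lia.
  rewrite -[l]mulr1; apply: qc_qcomm => //.
  rewrite scale1r; apply: xc_comm => //; move=> j h2 h3; apply: H; lia.
- have -> : s = m.+1 by lia.
  by rewrite xc_end -(_ : s = m.+1) //; lia.
Qed.

Lemma serre_ext v g h c : v * g = g * v -> serre v h = 0 -> serre v (qcomm h g c) = 0.
Proof.
move=> h1 h2; have h3 := serre_l h2; rewrite /serre.
have HR := conj h1 (conj h3 I); nc_prove HR [:: v] [:: q; c]; nc_fin.
Qed.


Lemma one_qi2 : 1 + q^-1 * q^-1 != 0.
Proof.
have e1 : (1 + q^-1 * q^-1) * (q * q) = q * q + 1 by field.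
by apply: contra hq2 => /eqP h; rewrite -e1 h mul0r.
Qed.

Lemma cancel_qi2 (X Y : A) : X - Y = (q^-1 * q^-1) *: (Y - X) -> X = Y.
Proof.
move=> h; apply/eqP; rewrite -subr_eq0.
have : (1 + q^-1 * q^-1) *: (X - Y) = 0.
  have -> : (1 + q^-1 * q^-1) *: (X - Y) = (X - Y) - (q^-1 * q^-1) *: (Y - X).
    have HR := I; nc_prove HR [:: X] [:: q]; nc_fin.
  by rewrite -h subrr.
by move/eqP; rewrite scaler_eq0 (negbTE one_qi2).
Qed.

Lemma FA2 u v w : u * w = w * u -> serre v u = 0 -> serre v w = 0 -> serre w v = 0 ->
  serre (qcomm v w q^-1) u = 0.
Proof.
move=> huw hvu hvw hwv.
pose P := qcomm v u q^-1; pose Z := qcomm v w q^-1; pose Y := qcomm Z u q^-1.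
have ha : v * P = q *: (P * v).
  apply/eqP; rewrite -subr_eq0 -hvu /serre /P; apply/eqP.
  have HR := I; nc_prove HR [:: v] [:: q]; nc_fin.
have hb : Z * v = q^-1 *: (v * Z).
  apply/eqP; rewrite -subr_eq0; apply/eqP.
  have -> : 0 = - q^-1 *: serre v w by rewrite hvw scaler0.
  rewrite /serre /Z; have HR := I; nc_prove HR [:: v] [:: q]; nc_fin.
have hc : Z * w = q *: (w * Z).
  apply/eqP; rewrite -subr_eq0 -hwv /serre /Z; apply/eqP.
  have HR := I; nc_prove HR [:: v] [:: q]; nc_fin.
have hY : Y = P * w - q^-1 *: (w * P).
  rewrite /Y /Z /P; have HR := conj huw I; nc_prove HR [:: v] [:: q]; nc_fin.
have hZu : Z * u = q^-1 *: (u * Z) + Y.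
  rewrite /Y; have HR := I; nc_prove HR [:: Z] [:: q]; nc_fin.
have hvw' : v * w = Z + q^-1 *: (w * v).
  rewrite /Z; have HR := I; nc_prove HR [:: v] [:: q]; nc_fin.
have hvu' : v * u = P + q^-1 *: (u * v).
  rewrite /P; have HR := I; nc_prove HR [:: v] [:: q]; nc_fin.
have he : Z * P = P * Z.
  apply: cancel_qi2.
  have HR := conj hb (conj hZu (conj hY (conj ha (conj hvw' (conj hvu' I))))).
  rewrite {1}(_ : Z * P = Z * qcomm v u q^-1) //.
  nc_prove HR [:: Z; P] [:: q]; nc_fin.
have hf : Z * Y = q *: (Y * Z).
  rewrite hY; have HR := conj hc (conj he I); nc_prove HR [:: Z] [:: q]; nc_fin.
have -> : serre (qcomm v w q^-1) u = Z * Y - q *: (Y * Z).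
  rewrite /Y /serre -/Z; have HR := I; nc_prove HR [:: Z] [:: q]; nc_fin.
by rewrite hf subrr.
Qed.

Lemma FA3 u w e' : u * e' = e' * u -> serre u w = 0 -> serre w u = 0 -> serre w e' = 0 ->
  serre (qcomm u w q^-1) e' = 0.
Proof.
move=> hue huw hwu hwe.
pose P := qcomm e' w q^-1; pose Z := qcomm u w q^-1; pose Y := qcomm e' Z q^-1.
have ha : P * w = q *: (w * P).
  apply/eqP; rewrite -subr_eq0 -hwe /serre /P; apply/eqP.
  have HR := I; nc_prove HR [:: w] [:: q]; nc_fin.
have hb : w * Z = q^-1 *: (Z * w).
  apply/eqP; rewrite -subr_eq0; apply/eqP.
  have -> : 0 = - q^-1 *: serre w u by rewrite hwu scaler0.
  rewrite /serre /Z; have HR := I; nc_prove HR [:: w] [:: q]; nc_fin.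
have hc : u * Z = q *: (Z * u).
  apply/eqP; rewrite -subr_eq0 -huw /serre /Z; apply/eqP.
  have HR := I; nc_prove HR [:: u] [:: q]; nc_fin.
have hY : Y = u * P - q^-1 *: (P * u).
  rewrite /Y /Z /P; have HR := conj hue I; nc_prove HR [:: u] [:: q]; nc_fin.
have hZu : e' * Z = q^-1 *: (Z * e') + Y.
  rewrite /Y; have HR := I; nc_prove HR [:: Z] [:: q]; nc_fin.
have hvw' : u * w = Z + q^-1 *: (w * u).
  rewrite /Z; have HR := I; nc_prove HR [:: u] [:: q]; nc_fin.
have hvu' : e' * w = P + q^-1 *: (w * e').
  rewrite /P; have HR := I; nc_prove HR [:: w] [:: q]; nc_fin.
have he : P * Z = Z * P.
  apply: cancel_qi2.
  have HR := conj hb (conj hZu (conj hY (conj ha (conj hvw' (conj hvu' I))))).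
  rewrite {1}(_ : P * Z = qcomm e' w q^-1 * Z) //.
  nc_prove HR [:: Z; P] [:: q]; nc_fin.
have hf : Y * Z = q *: (Z * Y).
  rewrite hY; have HR := conj hc (conj he I); nc_prove HR [:: Z] [:: q]; nc_fin.
have -> : serre (qcomm u w q^-1) e' = Y * Z - q *: (Z * Y).
  rewrite /Y /serre -/Z; have HR := I; nc_prove HR [:: Z] [:: q]; nc_fin.
by rewrite hf subrr.
Qed.

Hypothesis hm : (1 <= m)%N.

Lemma SEx s : (s <= m.+1)%N -> serre (e s) (Zc s.+1) = 0.
Proof.
move=> hs; case: (ltnP s m.+1) => h.
- rewrite Zc_S; last by lia.
  apply: serre_ext; last by apply: hSE; lia.
  apply: Zc_comm; first by lia.
  by move=> j h1 h2; apply: hEEc; lia.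
- have e1 : s = m.+1 by apply/eqP; rewrite eqn_leq hs h.
  by rewrite e1 Zc_end; apply: hSE; lia.
Qed.

Lemma SE1 s : (s <= m.+1)%N -> serre (Zc s.+1) (e s) = 0.
Proof.
move Hd: (m.+1 - s)%N => d; elim: d s Hd => [|d IH] s Hd hs.
- have -> : s = m.+1 by lia.
  by rewrite Zc_end; apply: hSE; lia.
- rewrite Zc_S; last by lia.
  apply: FA2.
  + by apply: Zc_comm; [lia| move=> j h1 h2; apply: hEEc; lia].
  + by apply: hSE; lia.
  + by apply: SEx; lia.
  + by apply: IH; lia.
Qed.

Lemma SE2 s : (s <= m.+2)%N -> serre (Zc s) (e m.+3) = 0.
Proof.
move Hd: (m.+2 - s)%N => d; elim: d s Hd => [|d IH] s Hd hs.
- have -> : s = m.+2 by lia.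
  by rewrite Zc_end; apply: hSE; lia.
- rewrite Zc_S; last by lia.
  apply: FA3.
  + by apply: hEEc; lia.
  + by apply: SEx; lia.
  + by apply: SE1; lia.
  + by apply: IH; lia.
Qed.

Lemma SFx : serre (f 1) (xc 2) = 0.
Proof.
case: (ltnP 1 m) => h.
- rewrite xc_S //.
  apply: serre_ext; last by apply: hSF; lia.
  apply: xc_comm; first by lia.
  by move=> j h1 h2; apply: hFFc; lia.
- have e2 : m = 1%N by lia.
  have := xc_end; rewrite e2 => ->.
  by apply: hSF; lia.
Qed.

Lemma swap_sc (x y : A) l : l != 0 -> y * x = l *: (x * y) -> x * y = l^-1 *: (y * x).
Proof. by move=> hl ->; rewrite scalerA mulVf // scale1r. Qed.

Lemma D1 s : (s <= m.+1)%N -> Zc s * f s = f s * Zc s - Zc s.+1 * km s.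
Proof.
move=> hs.
have r1 := @hEFd s ltac:(lia).
have r2 : Zc s.+1 * f s = f s * Zc s.+1.
  symmetry; apply: Zc_comm; first by lia.
  by move=> j h1 h2; symmetry; apply: hEFc; lia.
have r3 : kp s * Zc s.+1 = q^-1 *: (Zc s.+1 * kp s).
  apply: Zc_first; first by lia. by apply: Kpe_adj; lia.
  by move=> j h1 h2; apply: Kpe_far; lia.
have r4 : km s * Zc s.+1 = q *: (Zc s.+1 * km s).
  apply: Zc_first; first by lia. by apply: Kme_adj; lia.
  by move=> j h1 h2; apply: Kme_far; lia.
rewrite (Zc_S hs).
have HR := conj r1 (conj r2 (conj r3 (conj r4 I))).
nc_prove HR [:: e s] [:: q]; nc_fin.
Qed.

Definition Dx s := if (s <= m)%N then - (Zc s.+1 * km s * xc s.+1) + q *: (xc s.+1 * Zc s.+1 * km s)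
  else - (Zc s.+1 * km s).

Lemma D3 s : (s <= m.+1)%N -> Zc s * xc s = xc s * Zc s + Dx s.
Proof.
move Hd: (m.+1 - s)%N => d; elim: d s Hd => [|d IH] s Hd hs.
- have e1 : s = m.+1 by lia.
  rewrite e1 xc_end D1 // /Dx ifF; last by lia.
  by rewrite addrC.
- have hsm : (s <= m)%N by lia.
  have IH1 := IH s.+1 ltac:(lia) ltac:(lia).
  have rEx1 : e s * xc s.+1 = xc s.+1 * e s.
    apply: xc_comm; first by lia.
    by move=> j h1 h2; apply: hEFc; lia.
  have rEY2 : e s * Zc s.+2 = Zc s.+2 * e s.
    apply: Zc_comm; first by lia.
    by move=> j h1 h2; apply: hEEc; lia.
  have rEk : e s * km s.+1 = q^-1 *: (km s.+1 * e s).
    by apply: swap_sc => //; apply: Kme_adj'; lia.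
  have D2 : Zc s * xc s.+1 = xc s.+1 * Zc s.
    rewrite (@Zc_S s ltac:(lia)).
    move: IH1; rewrite /Dx; case: ifP => hc IH1.
    + have rEx2 : e s * xc s.+2 = xc s.+2 * e s.
        apply: xc_comm; first by lia.
        by move=> j h1 h2; apply: hEFc; lia.
      have HR := conj IH1 (conj rEx1 (conj rEY2 (conj rEx2 (conj rEk I)))).
      nc_prove HR [:: e s] [:: q]; nc_fin.
    + have HR := conj IH1 (conj rEx1 (conj rEY2 (conj rEk I))).
      nc_prove HR [:: e s] [:: q]; nc_fin.
  have D1s := @D1 s ltac:(lia).
  rewrite (xc_S hsm) /Dx ifT //.
  have HR := conj D1s (conj D2 I).
  nc_prove HR [:: Zc s] [:: q]; nc_fin.
Qed.


Lemma D2 s : (s <= m)%N -> Zc s * xc s.+1 = xc s.+1 * Zc s.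
Proof.
move=> hsm.
have IH1 := @D3 s.+1 ltac:(lia).
have rEx1 : e s * xc s.+1 = xc s.+1 * e s.
  apply: xc_comm; first by lia.
  by move=> j h1 h2; apply: hEFc; lia.
have rEY2 : e s * Zc s.+2 = Zc s.+2 * e s.
  apply: Zc_comm; first by lia.
  by move=> j h1 h2; apply: hEEc; lia.
have rEk : e s * km s.+1 = q^-1 *: (km s.+1 * e s).
  by apply: swap_sc => //; apply: Kme_adj'; lia.
rewrite (@Zc_S s ltac:(lia)).
move: IH1; rewrite /Dx; case: ifP => hc IH1.
- have rEx2 : e s * xc s.+2 = xc s.+2 * e s.
    apply: xc_comm; first by lia.
    by move=> j h1 h2; apply: hEFc; lia.
  have HR := conj IH1 (conj rEx1 (conj rEY2 (conj rEx2 (conj rEk I)))).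
  nc_prove HR [:: e s] [:: q]; nc_fin.
- have HR := conj IH1 (conj rEx1 (conj rEY2 (conj rEk I))).
  nc_prove HR [:: e s] [:: q]; nc_fin.
Qed.


Lemma partA (a b x : A) : a * x = x * a -> serre b x = 0 -> serre b a = 0 ->
  b * qcomm a (qcomm b x q) q = qcomm a (qcomm b x q) q * b.
Proof.
move=> hax hbx hba; have r1 := serre_m hbx; have r2 := serre_m hba.
have HR := conj hax (conj r1 (conj r2 I)); nc_prove HR [:: a] [:: q]; nc_fin.
Qed.

Lemma Zc_f1 : f 1 * Zc 2 = Zc 2 * f 1.
Proof. apply: Zc_comm; first by lia. by move=> j h1 h2; symmetry; apply: hEFc; lia. Qed.

Lemma km1_Z : km 1 * Zc 2 = q *: (Zc 2 * km 1).
Proof.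
apply: Zc_first; first by lia. by apply: Kme_adj; lia.
by move=> j h1 h2; apply: Kme_far; lia.
Qed.

Lemma km1_x : km 1 * xc 2 = q^-1 *: (xc 2 * km 1).
Proof.
apply: xc_first; first by lia. by apply: Kmf_adj; lia.
by move=> j h1 h2; apply: Kmf_far; lia.
Qed.

Lemma DD2 : Zc 2 * xc 2 - xc 2 * Zc 2 = Dx 2.
Proof. by rewrite (@D3 2 ltac:(lia)) addrAC subrr add0r. Qed.

Lemma T1 : (Zc 2 * xc 2 - xc 2 * Zc 2) * f 1 = q^-1 *: (f 1 * (Zc 2 * xc 2 - xc 2 * Zc 2)).
Proof.
rewrite DD2.
have r1 : Zc 3 * f 1 = f 1 * Zc 3.
  symmetry; apply: Zc_comm; first by lia. by move=> j h1 h2; symmetry; apply: hEFc; lia.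
have r2 : km 2 * f 1 = q^-1 *: (f 1 * km 2) by apply: Kmf_adj'; lia.
rewrite /Dx; case: ifP => hc.
- have r3 : xc 3 * f 1 = f 1 * xc 3.
    symmetry; apply: xc_comm; first by lia. by move=> j h1 h2; apply: hFFc; lia.
  have HR := conj r1 (conj r2 (conj r3 I)); nc_prove HR [:: f 1] [:: q]; nc_fin.
- have HR := conj r1 (conj r2 I); nc_prove HR [:: f 1] [:: q]; nc_fin.
Qed.


Lemma Z2Z3 : Zc 2 * Zc 3 = q *: (Zc 3 * Zc 2).
Proof.
apply/eqP; rewrite -subr_eq0; apply/eqP.
rewrite -(@SE1 2 ltac:(lia)) /serre (@Zc_S 2 ltac:(lia)).
have HR := I; nc_prove HR [:: e 2] [:: q]; nc_fin.
Qed.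

Lemma Zk2 : Zc 2 * km 2 = q *: (km 2 * Zc 2).
Proof.
have r2 : km 2 * Zc 2 = ((q * q)^-1 * q) *: (Zc 2 * km 2).
  rewrite (@Zc_S 2 ltac:(lia)); apply: qc_qcomm; first by apply: Kme_same; lia.
  apply: Zc_first; first by lia. by apply: Kme_adj; lia.
  by move=> j h1 h2; apply: Kme_far; lia.
have e1 : (q * q)^-1 * q = q^-1 by field.
rewrite e1 in r2.
by rewrite (swap_sc _ r2) ?invrK // invr_eq0.
Qed.

Lemma T2 : Zc 2 * (Zc 2 * xc 2 - xc 2 * Zc 2) = (q * q) *: ((Zc 2 * xc 2 - xc 2 * Zc 2) * Zc 2).
Proof.
rewrite DD2.
have r1 := Z2Z3. have r2 := Zk2.
rewrite /Dx; case: ifP => hc.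
- have r3 := @D2 2 hc.
  have HR := conj r1 (conj r3 (conj r2 I)); nc_prove HR [:: Zc 2] [:: q]; nc_fin.
- have HR := conj r1 (conj r2 I); nc_prove HR [:: Zc 2] [:: q]; nc_fin.
Qed.


Definition B0c (c0 : F) := f 0 - c0 *: (e m.+3 * km 0).
Definition B1c (c1 : F) := f 1 - c1 *: (Zc 2 * km 1).

Lemma partC c1 : serre (B1c c1) (xc 2) = 0.
Proof.
pose D := Zc 2 * xc 2 - xc 2 * Zc 2.
have r1 : km 1 * f 1 = (q * q) *: (f 1 * km 1) by apply: Kmf_same.
have r2 := km1_Z. have r3 := km1_x.
have r4 : km 1 * D = D * km 1.
  rewrite /D; have HR := conj r2 (conj r3 I); nc_prove HR [:: km 1] [:: q]; nc_fin.
have r5 : Zc 2 * f 1 = f 1 * Zc 2 by rewrite Zc_f1.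
have r6 : Zc 2 * xc 2 = xc 2 * Zc 2 + D by rewrite /D addrC subrK.
have r7 : D * f 1 = q^-1 *: (f 1 * D) := T1.
have r8 : Zc 2 * D = (q * q) *: (D * Zc 2) := T2.
have r9 := serre_l SFx.
rewrite /serre /B1c.
have HR := conj r1 (conj r2 (conj r3 (conj r4 (conj r5 (conj r6 (conj r7 (conj r8 (conj r9 I)))))))).
nc_prove HR [:: f 1] [:: q; c1]; nc_fin.
Qed.

Lemma partB c0 c1 : serre (B1c c1) (B0c c0) = 0.
Proof.
have r1 : km 0 * f 1 = q^-1 *: (f 1 * km 0) by apply: Kmf_adj.
have r2 : km 0 * f 0 = (q * q) *: (f 0 * km 0) by apply: Kmf_same.
have r3 : km 0 * Zc 2 = Zc 2 * km 0.
  apply: Zc_comm; first by lia. by move=> j h1 h2; apply: Kme_far; lia.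
have r4 : km 0 * e m.+3 = e m.+3 * km 0 by apply: Kme_far; lia.
have r5 : km 1 * f 0 = q^-1 *: (f 0 * km 1) by apply: Kmf_adj'.
have r6 : km 1 * f 1 = (q * q) *: (f 1 * km 1) by apply: Kmf_same.
have r7 := km1_Z.
have r8 : km 1 * e m.+3 = e m.+3 * km 1 by apply: Kme_far; lia.
have r9 : km 1 * km 0 = km 0 * km 1 by apply: hKK.
have r10 := Zc_f1.
have r11 : f 0 * Zc 2 = Zc 2 * f 0.
  apply: Zc_comm; first by lia. by move=> j h1 h2; symmetry; apply: hEFc; lia.
have r12 : f 0 * e m.+3 = e m.+3 * f 0 by symmetry; apply: hEFc; lia.
have r13 : f 1 * e m.+3 = e m.+3 * f 1 by symmetry; apply: hEFc; lia.
have r14 := serre_l (@hSF 1 0 ltac:(lia) ltac:(lia) ltac:(lia)).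
have r15 := serre_l (@SE2 2 ltac:(lia)).
rewrite /serre /B1c /B0c.
have HR := conj r1 (conj r2 (conj r3 (conj r4 (conj r5 (conj r6 (conj r7 (conj r8 (conj r9
  (conj r10 (conj r11 (conj r12 (conj r13 (conj r14 (conj r15 I)))))))))))))).
nc_prove HR [:: f 1] [:: q; c0; c1]; nc_fin.
Qed.

Lemma hax c0 : B0c c0 * xc 2 = xc 2 * B0c c0.
Proof.
have r1 : f 0 * xc 2 = xc 2 * f 0.
  apply: xc_comm; first by lia. by move=> j h1 h2; apply: hFFc; lia.
have r2 : e m.+3 * xc 2 = xc 2 * e m.+3.
  apply: xc_comm; first by lia. by move=> j h1 h2; apply: hEFc; lia.
have r3 : km 0 * xc 2 = xc 2 * km 0.
  apply: xc_comm; first by lia. by move=> j h1 h2; apply: Kmf_far; lia.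
rewrite /B0c; have HR := conj r1 (conj r2 (conj r3 I)); nc_prove HR [:: f 0] [:: q; c0]; nc_fin.
Qed.

Theorem chain_main c0 c1 :
  B1c c1 * qcomm (B0c c0) (qcomm (B1c c1) (xc 2) q) q = qcomm (B0c c0) (qcomm (B1c c1) (xc 2) q) q * B1c c1.
Proof. by apply: partA; [apply: hax | apply: partC | apply: partB]. Qed.


Definition Lc s := foldr (fun j acc => qcomm (e j) acc q^-1) (e m.+1) (iota s (m.+1 - s)).

Lemma Zc_L s : (s <= m.+1)%N -> Zc s = qcomm (Lc s) (e m.+2) q^-1.
Proof.
move Hd: (m.+1 - s)%N => d; elim: d s Hd => [|d IH] s Hd hs.
- have e1 : s = m.+1 by lia.
  by rewrite e1 Zc_S // Zc_end /Lc subnn.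
- have hsm : (s <= m)%N by lia.
  have -> : Lc s = qcomm (e s) (Lc s.+1) q^-1 by rewrite /Lc subSn // subSS.
  rewrite Zc_S; last by lia.
  rewrite IH; [|lia|lia].
  have r1 : e m.+2 * e s = e s * e m.+2 by symmetry; apply: hEEc; lia.
  have HR := conj r1 I; nc_prove HR [:: e s] [:: q]; nc_fin.
Qed.


Definition B1c' (c1 : F) := f 1 - c1 *: (qcomm (Lc 2) (e m.+2) q^-1 * km 1).

Theorem chain_main' c0 c1 :
  B1c' c1 * qcomm (B0c c0) (qcomm (B1c' c1) (xc 2) q) q = qcomm (B0c c0) (qcomm (B1c' c1) (xc 2) q) q * B1c' c1.
Proof. rewrite /B1c' -(@Zc_L 2 ltac:(lia)); exact: chain_main. Qed.

End Chain.



Lemma cartan2 i j : cartan i j = 2 -> i = j.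
Proof. rewrite /cartan; case: eqP => // _; by case: ifP. Qed.

Lemma cartan_inj (a b c d : nat) : (a == b) = (c == d) ->
  ((a == b.+1) || (b == a.+1)) = ((c == d.+1) || (d == c.+1)) -> cartan a b = cartan c d.
Proof. by rewrite /cartan => -> ->. Qed.

Lemma coord_alpha n i j : (1 <= j <= n)%N -> Defs.coord (alpha n i) j = cartan i j.
Proof.
move=> /andP [h1 h2].
have hj : (j.-1 < n)%N by lia.
rewrite /Defs.coord (big_pred1 (Ordinal hj)) /=; last first.
  by move=> k; apply/eqP/eqP => [h|->]; [apply: val_inj => /=; lia | rewrite /=; lia].
by rewrite /alpha ffunE /=; congr cartan; lia.
Qed.

Lemma coordN n (mu : wt n) j : Defs.coord (- mu) j = - Defs.coord mu j.
Proof. by rewrite /Defs.coord -sumrN; apply: eq_bigr => k _; rewrite ffunE. Qed.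

Section Inst.
Variables (F : fieldType) (A : algType F) (q : F).
Hypotheses (hq : q != 0) (hq2 : q * q + 1 != 0) (hq3 : q * q - 1 != 0).
Variables (n : nat) (E Fg : nat -> A) (K : wt n -> A).
Hypothesis hrel : UqRel q E Fg K.
Variables (m : nat) (p : nat -> nat).
Hypothesis hp : forall i, (i <= m.+3)%N -> (1 <= p i <= n)%N.
Hypothesis hpc : forall i j, (i <= m.+3)%N -> (j <= m.+3)%N -> cartan (p i) (p j) = cartan i j.
Hypothesis hm : (1 <= m)%N.

Lemma inst_main c0 c1 :
  B1c' q m (fun j => E (p j)) (fun j => Fg (p j)) (fun j => K (- alpha n (p j))) c1 *
    qcomm (B0c m (fun j => E (p j)) (fun j => Fg (p j)) (fun j => K (- alpha n (p j))) c0)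
      (qcomm (B1c' q m (fun j => E (p j)) (fun j => Fg (p j)) (fun j => K (- alpha n (p j))) c1)
        (xc q m (fun j => Fg (p j)) 2) q) q
  = qcomm (B0c m (fun j => E (p j)) (fun j => Fg (p j)) (fun j => K (- alpha n (p j))) c0)
      (qcomm (B1c' q m (fun j => E (p j)) (fun j => Fg (p j)) (fun j => K (- alpha n (p j))) c1)
        (xc q m (fun j => Fg (p j)) 2) q) q *
    B1c' q m (fun j => E (p j)) (fun j => Fg (p j)) (fun j => K (- alpha n (p j))) c1.
Proof.
pose e := fun j => E (p j); pose f := fun j => Fg (p j).
pose kp := fun j => K (alpha n (p j)); pose km := fun j => K (- alpha n (p j)).
case: hrel => hK0 hKadd hKE hKF [hEF hS].
apply: (@chain_main' F A q hq hq2 hq3 m e f kp km) => //.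
- move=> i j hi hj hij; apply/eqP; rewrite -subr_eq0; apply/eqP.
  rewrite /e /f hEF; try by apply: hp.
  case: eqP => // h; exfalso; move/negP: hij; apply; apply/eqP.
  by apply: cartan2; rewrite -hpc // h cartan_same.
- move=> i hi; rewrite /e /f -[LHS](subrK (Fg (p i) * E (p i))) hEF ?eqxx ?hp //.
  by rewrite addrC.
- move=> i j hj hij; have hi : (i <= m.+3)%N by lia.
  have := hS (p i) (p j) (hp hi) (hp hj); rewrite hpc //.
  by have [-> _] := cartan_far hij; case=> _ /(_ erefl) [h1 h2].
- move=> i j hj hij; have hi : (i <= m.+3)%N by lia.
  have := hS (p i) (p j) (hp hi) (hp hj); rewrite hpc //.
  by have [-> _] := cartan_far hij; case=> _ /(_ erefl) [h1 h2].
- move=> i j hi hj hij.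
  have hc : cartan i j = -1 by rewrite /cartan; case: eqP => [h|_]; [lia | rewrite hij].
  have := hS (p i) (p j) (hp hi) (hp hj); rewrite hpc // hc; case=> /(_ erefl) [h _] _.
  by move: h; rewrite /e !expr2 !mulrA.
- move=> i j hi hj hij.
  have hc : cartan i j = -1 by rewrite /cartan; case: eqP => [h|_]; [lia | rewrite hij].
  have := hS (p i) (p j) (hp hi) (hp hj); rewrite hpc // hc; case=> /(_ erefl) [_ h] _.
  by move: h; rewrite /f !expr2 !mulrA.
- move=> i j hi hj; rewrite /km /e hKE; last by apply: hp.
  by rewrite coordN coord_alpha ?hpc //; apply: hp.
- move=> i j hi hj; rewrite /kp /e hKE; last by apply: hp.
  by rewrite coord_alpha ?hpc //; apply: hp.
- move=> i j hi hj; rewrite /km /f hKF; last by apply: hp.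
  by rewrite coordN opprK coord_alpha ?hpc //; apply: hp.
- by move=> i j; rewrite /km -!hKadd addrC.
Qed.

End Inst.



Lemma map_sub_iota (c s k : nat) : (s + k <= c.+1)%N ->
  map (fun j => c - j)%N (iota s k) = rev (iota (c.+1 - s - k) k).
Proof.
elim: k s => [|k IH] s h; first by [].
rewrite (_ : iota s k.+1 = s :: iota s.+1 k) // map_cons IH; last by lia.
have := iotaD (c.+1 - s - k.+1) k 1; rewrite addn1 => ->.
rewrite rev_cat /=.
have -> : (c.+1 - s - k.+1 + k = c - s)%N by lia.
by congr (_ :: rev (iota _ _)); lia.
Qed.

Section Final.
Variables (F : fieldType) (A : algType F) (q : F).
Hypotheses (hq : q != 0) (hq2 : q * q + 1 != 0) (hq3 : q * q - 1 != 0).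
Variables (n r : nat) (E Fg : nat -> A) (K : wt n -> A) (c : nat -> F).
Hypothesis hrel : UqRel q E Fg K.
Hypotheses (hr2 : (2 <= r)%N) (hrn : (r.*2.+1 <= n)%N).

Lemma side1 : Br r q E Fg K c * Sel r q E Fg K c = Sel r q E Fg K c * Br r q E Fg K c.
Proof.
pose m := (n - r - r)%N.
have hm : (1 <= m)%N by rewrite /m; lia.
have hp : forall i, (i <= m.+3)%N -> (1 <= r.-1 + i <= n)%N by move=> i hi; rewrite /m in hi *; lia.
have hpc : forall i j, (i <= m.+3)%N -> (j <= m.+3)%N -> cartan (r.-1 + i) (r.-1 + j) = cartan i j.
  by move=> i j hi hj; apply: cartan_inj; lia.
have H := @inst_main F A q hq hq2 hq3 n E Fg K hrel m (fun i => r.-1 + i)%N hp hpc hm (c r.-1) (c r).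
cbv beta in H.
have eL : Lc q m (fun j => E (r.-1 + j)%N) 2 = EXp n r q E.
  rewrite /Lc /EXp.
  have -> : iota r.+1 (n - r - r).-1 = map (addn r.-1) (iota 2 (m.+1 - 2)).
    by rewrite -iotaDl; congr iota; rewrite /m; lia.
  rewrite foldr_map; congr foldr; congr E; rewrite /m; lia.
have eX : xc q m (fun j => Fg (r.-1 + j)%N) 2 = FXp n r q Fg.
  rewrite /xc /FXp.
  have -> : iota r.+1 (n - r - r).-1 = map (addn r.-1) (iota 2 (m.+1 - 2)).
    by rewrite -iotaDl; congr iota; rewrite /m; lia.
  rewrite foldr_map; congr foldr; congr Fg; rewrite /m; lia.
rewrite /B0c /B1c' eL eX in H.
have e0 : (r.-1 + 0 = r.-1)%N by lia.
have e1 : (r.-1 + 1 = r)%N by lia.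
have e3 : (r.-1 + m.+3 = tau n r.-1)%N by rewrite /tau /m; lia.
have e2 : (r.-1 + m.+2 = tau n r)%N by rewrite /tau /m; lia.
rewrite e0 e1 e2 e3 in H.
by rewrite /Sel /Br /Bgen.
Qed.

Lemma side2 : Btr r q E Fg K c * Stau r q E Fg K c = Stau r q E Fg K c * Btr r q E Fg K c.
Proof.
pose m := (n - r - r)%N.
have hm : (1 <= m)%N by rewrite /m; lia.
have hp : forall i, (i <= m.+3)%N -> (1 <= (n - r).+2 - i <= n)%N by move=> i hi; rewrite /m in hi *; lia.
have hpc : forall i j, (i <= m.+3)%N -> (j <= m.+3)%N ->
    cartan ((n - r).+2 - i) ((n - r).+2 - j) = cartan i j.
  by move=> i j hi hj; apply: cartan_inj; rewrite /m in hi hj; lia.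
have H := @inst_main F A q hq hq2 hq3 n E Fg K hrel m (fun i => (n - r).+2 - i)%N hp hpc hm
  (c (tau n r.-1)) (c (tau n r)).
cbv beta in H.
have eL : Lc q m (fun j => E ((n - r).+2 - j)%N) 2 = EXm n r q E.
  rewrite /Lc /EXm.
  have -> : rev (iota r.+2 (n - r - r).-1) = map (fun j => (n - r).+2 - j)%N (iota 2 (m.+1 - 2)).
    by rewrite map_sub_iota; [congr (rev (iota _ _)) | ]; rewrite /m; lia.
  rewrite foldr_map; congr foldr; congr E; rewrite /m; lia.
have eX : xc q m (fun j => Fg ((n - r).+2 - j)%N) 2 = FXm n r q Fg.
  rewrite /xc /FXm.
  have -> : rev (iota r.+2 (n - r - r).-1) = map (fun j => (n - r).+2 - j)%N (iota 2 (m.+1 - 2)).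
    by rewrite map_sub_iota; [congr (rev (iota _ _)) | ]; rewrite /m; lia.
  rewrite foldr_map; congr foldr; congr Fg; rewrite /m; lia.
rewrite /B0c /B1c' eL eX in H.
have e0 : ((n - r).+2 - 0 = tau n r.-1)%N by rewrite /tau; lia.
have e1 : ((n - r).+2 - 1 = tau n r)%N by rewrite /tau; lia.
have e3 : ((n - r).+2 - m.+3 = tau n (tau n r.-1))%N by rewrite /tau /m; lia.
have e2 : ((n - r).+2 - m.+2 = r)%N by rewrite /m; lia.
rewrite e0 e1 e2 e3 in H.
by rewrite /Stau /Btr /Bgen.
Qed.

End Final.


Unset Implicit Arguments.

Theorem lemmaA4 (k : fieldType) (char0 : [pchar k] =i pred0)
  (n r : nat) (hn : (1 <= n)%N) (hr2 : (2 <= r)%N) (hrn : (r <= uphalf n - 1)%N)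
  (A : algType (ratfun k)) (E Fg : nat -> A) (K : wt n -> A) (c : nat -> ratfun k)
  (hrel : UqRel (qpar k) E Fg K)
  (hc0 : forall i, (1 <= i <= n)%N -> ~~ (r < i <= n - r)%N -> c i != 0)
  (hcsym : forall i, (1 <= i <= n)%N -> ~~ (r < i <= n - r)%N ->
             i != r -> i != tau n r -> c i = c (tau n i)) :
  Br r (qpar k) E Fg K c * Sel r (qpar k) E Fg K c
    = Sel r (qpar k) E Fg K c * Br r (qpar k) E Fg K c /\
  Btr r (qpar k) E Fg K c * Stau r (qpar k) E Fg K c
    = Stau r (qpar k) E Fg K c * Btr r (qpar k) E Fg K c.
Proof.
have hX : (qhalf k) != 0 by rewrite /qhalf tofrac_eq0 polyX_eq0.
have hq : qpar k != 0 by rewrite /qpar expf_neq0.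
have hq2 : qpar k * qpar k + 1 != 0.
  rewrite /qpar /qhalf -!tofracXn -tofracM -tofrac1 -tofracD tofrac_eq0.
  apply/negP => /eqP h; have := congr1 (horner^~ 0) h.
  rewrite hornerD hornerM !hornerXn hornerC expr0n /= mul0r add0r => /eqP; by rewrite horner0 oner_eq0.
have hq3 : qpar k * qpar k - 1 != 0.
  rewrite /qpar /qhalf -!tofracXn -tofracM -tofrac1 -tofracB tofrac_eq0.
  apply/negP => /eqP h; have := congr1 (horner^~ 0) h.
  rewrite hornerD hornerN hornerM !hornerXn hornerC expr0n /= mul0r add0r => /eqP; by rewrite horner0 oppr_eq0 oner_eq0.
have hrn' : (r.*2.+1 <= n)%N by move: hrn; rewrite uphalfE; lia.
split.
- exact: (side1 hq hq2 hq3 c hrel hr2 hrn').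
- exact: (side2 hq hq2 hq3 c hrel hr2 hrn').
Qed.
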